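(* Consider an execution of algorithm $\mathcal{A}_2$ (described in the context) in a synchronous message-passing system of $n$ processes with authentication in which up to $t<n$ processes are Byzantine. Then at most $\lfloor \frac{n}{n-t} \rfloor$ distinct values are decided by correct processes.
   Context: Model: synchronous rounds, reliable channels between all pairs, unforgeable signatures, up to $t$ Byzantine processes; the others are correct. The decision $\bot$ counts as a decided value. Terminating Reliable Broadcast (TRB) with sender $p$: $p$ broadcasts a value $m$ and every process delivers either a value or a special value $SF$, satisfying: (Termination) every correct process delivers some value; (Validity) if the sender is correct and broadcasts $m$, every correct process delivers $m$; (Integrity) a process delivers at most once, and if it delivers $m\ne SF$ then $m$ was broadcast by the sender; (Agreement) if a correct process delivers $m$, all correct processes deliver $m$. TRB is implemented in this model in $t+1$ rounds by the classical authenticated signature-chain algorithm. Algorithm $\mathcal{A}_2$, code of $p_i$ with input $v_i$: Phase 1: $n$ instances of TRB are run, instance $q$ having $p_q$ as sender; $p_i$ broadcasts $v_i$ in its own instance and sets $L_i[p_i] := v_i$; for each process $q$, $p_i$ sets $L_i[q]$ to the value (possibly $SF$) delivered in the instance with sender $q$. Phase 2: if at least $n-t$ entries of $L_i$ equal $v_i$, decide $v_i$; else, if some value $v$ appears at least $n-t$ times in $L_i$, decide such a $v$; else decide $\bot$. *)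

(* Defs.v *)
From mathcomp Require Import all_boot.
Set Implicit Arguments. Unset Strict Implicit. Unset Printing Implicit Defensive.

(* A delivered value in a TRB
   instance is an [option V]: [Some m] is the value m, [None] is SF.
   A decision is an [option V]: [Some v] is the value v, [None] is bot. *)

(* Outcome of the TRB instances of Phase 1 in an execution:
   [deliv q i] is what process i delivers in the instance whose sender is q.
   [C] is the set of correct processes, [v i] the input of p_i,
   [bcast q m] means that sender q broadcast m in its instance. *)
Definition TRB_spec (n : nat) (V : eqType) (C : {set 'I_n}) (v : 'I_n -> V)
    (bcast : 'I_n -> V -> Prop) (deliv : 'I_n -> 'I_n -> option V) : Prop :=
  (forall q m, q \in C -> (bcast q m <-> m = v q)) /\
  (forall q i, q \in C -> i \in C -> deliv q i = Some (v q)) /\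
  (* Integrity (deliver at most once is built into [deliv] being a function;
     Termination is built into [deliv] being total) *)
  (forall q i m, i \in C -> deliv q i = Some m -> bcast q m) /\
  (forall q i j m, i \in C -> j \in C -> deliv q i = m -> deliv q j = m).

Definition Lvec (n : nat) (V : eqType) (v : 'I_n -> V)
    (deliv : 'I_n -> 'I_n -> option V) (i : 'I_n) : 'I_n -> option V :=
  fun q => if q == i then Some (v i) else deliv q i.

Definition occ (n : nat) (V : eqType) (L : 'I_n -> option V) (w : V) : nat :=
  #|[pred q | L q == Some w]|.

(* Phase 2 rule: [d] is a decision allowed for a process with vector L and
   input vi (the choice "decide such a v" is nondeterministic). *)
Definition phase2 (n t : nat) (V : eqType) (L : 'I_n -> option V) (vi : V)
    (d : option V) : Prop :=
  (n - t <= occ L vi /\ d = Some vi)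
  \/ (occ L vi < n - t /\ exists w, n - t <= occ L w /\ d = Some w)
  \/ (occ L vi < n - t /\ (forall w, occ L w < n - t) /\ d = None).

(* Main.v *)
Require Import Defs.
From mathcomp Require Import all_boot.
Lemma count_bound (n k : nat) (T:eqType) (L : 'I_n -> T) (S : seq T) :
  uniq S -> (forall x, x \in S -> k <= #|[pred q | L q == x]|) -> size S * k <= n.
Proof.
move=> uS H.
have E : \sum_(x <- S) #|[pred q | L q == x]| <= n.
  have -> : \sum_(x <- S) #|[pred q | L q == x]| = \sum_(x <- S) \sum_(q : 'I_n) (x == L q : nat).
    apply: eq_bigr => x _; rewrite -sum1_card big_mkcond /=.
    apply: eq_bigr => q _; rewrite inE eq_sym; by case: (x == L q).
  rewrite exchange_big /=.
  apply: (leq_trans (n := \sum_(q : 'I_n) 1)); last by rewrite sum1_card card_ord.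
  apply: leq_sum => q _.
  have -> : \sum_(x <- S) (x == L q : nat) = count_mem (L q) S.
    rewrite -sum1_count [RHS]big_mkcond; apply: eq_bigr => x _ /=; by case: (x == L q).
  by rewrite (count_uniq_mem _ uS); case: (_ \in _).
apply: leq_trans E.
have -> : size S * k = \sum_(x <- S) k.
  by rewrite big_const_seq count_predT; elim: (size S) => //= m IH; rewrite mulSn IH.
rewrite big_seq_cond [X in _ <= X]big_seq_cond.
by apply: leq_sum => x /andP[xS _]; apply: H.
Qed.

Theorem lemma10 (n t : nat) (V : eqType) (C : {set 'I_n}) (v : 'I_n -> V)
    (bcast : 'I_n -> V -> Prop) (deliv : 'I_n -> 'I_n -> option V)
    (dec : 'I_n -> option V) :
  t < n ->
  n - t <= #|C| ->
  TRB_spec C v bcast deliv ->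
  (forall i, i \in C -> phase2 t (Lvec v deliv i) (v i) (dec i)) ->
  size (undup [seq dec i | i <- enum C]) <= n %/ (n - t).
Proof.
move=> tn hC [Hb [Hval [Hint Hagr]]] Hdec.
have d0 : 0 < n - t by rewrite subn_gt0.
have [j0 j0C] : exists j0, j0 \in C.
  by apply/card_gt0P; apply: leq_trans hC.
pose L := fun q => deliv q j0.
have HL : forall i, i \in C -> forall w, occ (Lvec v deliv i) w = occ L w.
  move=> i iC w; rewrite /occ; apply: eq_card => q; rewrite !inE /Lvec /L /=.
  case: ifP => [/eqP ->|_]; first by rewrite (Hval i j0 iC j0C).
  by rewrite (Hagr q i j0 _ iC j0C erefl).
case: (boolP [exists i in C, dec i == None]).
  case/existsP => i /andP [iC /eqP di].
  have allw : forall w, occ L w < n - t.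
    move: (Hdec i iC); rewrite di => -[[_ //]|[[_ [w [_ //]]]|[_ [H _]]]].
    by move=> w; rewrite -(HL i iC).
  have allN : forall j, j \in C -> dec j = None.
    move=> j jC; move: (Hdec j jC) => -[[H _]|[[_ [w [H _]]]|[_ [_ ->]]]] //.
      by move: H; rewrite (HL j jC) leqNgt allw.
    by move: H; rewrite (HL j jC) leqNgt allw.
  apply: (leq_trans (n := size [:: (None : option V)])).
    apply: uniq_leq_size; first exact: undup_uniq.
    move=> x; rewrite mem_undup => /mapP [j]; rewrite mem_enum => jC ->.
    by rewrite allN // inE.
  by rewrite /= divn_gt0 // leq_subr.
rewrite negb_exists => /forallP HN.
rewrite leq_divRL //; apply: (@count_bound n (n - t) _ L); first exact: undup_uniq.
move=> x; rewrite mem_undup => /mapP [j]; rewrite mem_enum => jC ->.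
move: (HN j); rewrite jC /= => /eqP dN.
move: (Hdec j jC) => -[[H ->]|[[_ [w [H ->]]]|[_ [_ //]]]].
  by move: H; rewrite (HL j jC).
by move: H; rewrite (HL j jC).
Qed.
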